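(* Let $u^1_{2n}$ denote the coefficient of $a^2$ in the Taylor expansion $u_{2n}(a)=u^0_{2n}+u^1_{2n}a^2+u^2_{2n}a^4+O(a^6)$ at $a=0$. Then $$u^1_2=-1,\qquad u^1_4=-\frac{15}{16},\qquad u^1_{2n}=-\frac{61}{12^2}\,\frac{(n+1)^2}{2^n}\quad(n\ge3).$$
   Context: The rational functions $u_{2n}(a)$ (which depend on $a$ only through $a^2$) are defined by $(a^2+1)u_2=1$ and, for $n\ge2$, $(a^2+n^2)u_{2n}=3u_{2(n-1)}+3\sum_{j_1+j_2=n-1}u_{2j_1}u_{2j_2}+\sum_{j_1+j_2+j_3=n-1}u_{2j_1}u_{2j_2}u_{2j_3}-\sum_{1\le j_1,\,2j_1<n}(n-2j_1)^2u_{2j_1}u_{2(n-j_1)}$, all indices $j_i\ge1$. *)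

(* Defs.v *)
From mathcomp Require Import all_boot all_order all_algebra.
Set Implicit Arguments. Unset Strict Implicit. Unset Printing Implicit Defensive.
Import Order.TTheory GRing.Theory Num.Theory.
Local Open Scope ring_scope.

Section U.
Variable R : realFieldType.

(* Given s = [:: u_2(a); u_4(a); ...; u_{2(n-1)}(a)], compute u_{2n}(a). *)
Definition unext (n : nat) (s : seq R) (a : R) : R :=
  let U j := nth 0 s j.-1 in
  if n == 1%N then (a ^+ 2 + 1)^-1
  else
   (3 * U n.-1
    + 3 * (\sum_(1 <= j1 < n.-1) U j1 * U (n.-1 - j1)%N)
    + (\sum_(1 <= j1 < n.-1) \sum_(1 <= j2 < n.-1 - j1)
          U j1 * U j2 * U (n.-1 - j1 - j2)%N)
    - (\sum_(1 <= j1 < n | (2 * j1 < n)%N)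
          ((n - 2 * j1)%N ^ 2)%:R * U j1 * U (n - j1)%N))
   / (a ^+ 2 + (n ^ 2)%:R).

Fixpoint ulist (n : nat) (a : R) : seq R :=
  match n with
  | 0 => [::]
  | n'.+1 => let s := ulist n' a in rcons s (unext n'.+1 s a)
  end.

(* u n a = u_{2n}(a), for n >= 1 *)
Definition u (n : nat) (a : R) : R := nth 0 (ulist n a) n.-1.

Definition a2_coeff (f : R -> R) (c : R) : Prop :=
  exists c0 c2 C delta : R, 0 < delta /\
    forall a : R, `|a| < delta ->
      `|f a - (c0 + c * a ^+ 2 + c2 * a ^+ 4)| <= C * `|a| ^+ 6.

End U.

(* Main.v *)
Require Import Defs.
From mathcomp Require Import all_boot all_order all_algebra.
From mathcomp Require Import ring lra zify.
Import Order.TTheory GRing.Theory Num.Theory.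
Local Open Scope ring_scope.
Set Implicit Arguments. Unset Strict Implicit.



Section Ana.
Variable R : realFieldType.
Implicit Types f g : R -> R.

Definition ok f (c0 c1 : R) := exists c2 C d : R, 0 < d /\ forall a, `|a| < d ->
  `|f a - (c0 + c1 * a ^+ 2 + c2 * a ^+ 4)| <= C * `|a| ^+ 6.

Lemma okW f c0 c1 : ok f c0 c1 -> exists c2 C d : R, [/\ 0 < d, d <= 1, 0 <= C &
  forall a, `|a| < d -> `|f a - (c0 + c1 * a ^+ 2 + c2 * a ^+ 4)| <= C * `|a| ^+ 6].
Proof.
case=> c2 [C [d [d0 H]]]; exists c2, `|C|, (Num.min d 1); split.
- by rewrite lt_min d0 ltr01.
- by rewrite ge_min lexx orbT.
- by [].
move=> a; rewrite lt_min => /andP[ad _]; apply: le_trans (H a ad) _.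
by apply: ler_wpM2r; [rewrite exprn_ge0 | exact: ler_norm].
Qed.

Lemma ok_ext f g c0 c1 : (forall a, f a = g a) -> ok f c0 c1 -> ok g c0 c1.
Proof. move=> e [c2 [C [d [d0 H]]]]; exists c2, C, d; split=> // a; rewrite -e; exact: H. Qed.

Lemma ok_eq f c0 c1 c0' c1' : ok f c0 c1 -> c0 = c0' -> c1 = c1' -> ok f c0' c1'.
Proof. by move=> h <- <-. Qed.

Lemma ok_const k : ok (fun=> k) k 0.
Proof.
exists 0, 0, 1; split=> [|a _]; first exact: ltr01.
by rewrite !mul0r !addr0 subrr normr0.
Qed.

Lemma ok_add f g a0 a1 b0 b1 : ok f a0 a1 -> ok g b0 b1 ->
  ok (fun a => f a + g a) (a0 + b0) (a1 + b1).
Proof.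
case=> a2 [C [d [d0 H]]] [b2 [C' [d' [d0' H']]]].
exists (a2 + b2), (C + C'), (Num.min d d'); split; first by rewrite lt_min d0 d0'.
move=> a; rewrite lt_min => /andP[ad ad'].
have -> : f a + g a - (a0 + b0 + (a1 + b1) * a ^+ 2 + (a2 + b2) * a ^+ 4) =
  (f a - (a0 + a1 * a ^+ 2 + a2 * a ^+ 4)) + (g a - (b0 + b1 * a ^+ 2 + b2 * a ^+ 4)) by ring.
rewrite mulrDl; apply: le_trans (ler_normD _ _) _; exact: lerD (H a ad) (H' a ad').
Qed.

Lemma ok_scale k f a0 a1 : ok f a0 a1 -> ok (fun a => k * f a) (k * a0) (k * a1).
Proof.
case=> a2 [C [d [d0 H]]]; exists (k * a2), (`|k| * C), d; split=> // a ad.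
have -> : k * f a - (k * a0 + k * a1 * a ^+ 2 + k * a2 * a ^+ 4) =
  k * (f a - (a0 + a1 * a ^+ 2 + a2 * a ^+ 4)) by ring.
by rewrite normrM -mulrA; apply: ler_wpM2l => //; exact: H.
Qed.

Lemma ok_sub f g a0 a1 b0 b1 : ok f a0 a1 -> ok g b0 b1 ->
  ok (fun a => f a - g a) (a0 - b0) (a1 - b1).
Proof.
move=> hf hg; have := ok_add hf (ok_scale (-1) hg).
move/ok_ext => /(_ (fun a => f a - g a)) h.
by apply: ok_eq (h _) _ _; rewrite ?mulN1r // => a; rewrite mulN1r.
Qed.

Lemma nb (c x : R) k : `|x| <= 1 -> `|c * x ^+ k| <= `|c|.
Proof.
move=> x1; rewrite normrM normrX -[leRHS]mulr1; apply: ler_wpM2l => //.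
by rewrite exprn_ile1.
Qed.

Lemma mul_bound (p0 p1 p2 q0 q1 q2 F G x C C' : R) : `|x| <= 1 -> 0 <= C -> 0 <= C' ->
  `|F - (p0 + p1 * x ^+ 2 + p2 * x ^+ 4)| <= C * `|x| ^+ 6 ->
  `|G - (q0 + q1 * x ^+ 2 + q2 * x ^+ 4)| <= C' * `|x| ^+ 6 ->
  `|F * G - (p0 * q0 + (p0 * q1 + p1 * q0) * x ^+ 2 + (p0 * q2 + p1 * q1 + p2 * q0) * x ^+ 4)|
  <= (`|p1 * q2 + p2 * q1| + `|p2 * q2| + (`|p0| + `|p1| + `|p2|) * C'
      + C * (`|q0| + `|q1| + `|q2|) + C * C') * `|x| ^+ 6.
Proof.
move=> x1 C0 C0'.
set P := p0 + p1 * x ^+ 2 + p2 * x ^+ 4; set Q := q0 + q1 * x ^+ 2 + q2 * x ^+ 4.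
rewrite -[F](subrK P) -[G](subrK Q).
move: (F - P) (G - Q) => E1 E2 h1 h2.
rewrite addrK in h1; rewrite addrK in h2.
set e := `|x| ^+ 6.
have e0 : 0 <= e by rewrite exprn_ge0.
have e1 : e <= 1 by rewrite exprn_ile1.
have hP : `|P| <= `|p0| + `|p1| + `|p2|.
  apply: le_trans (ler_normD _ _) _; apply: lerD; last exact: nb.
  apply: le_trans (ler_normD _ _) _; apply: lerD => //; exact: nb.
have hQ : `|Q| <= `|q0| + `|q1| + `|q2|.
  apply: le_trans (ler_normD _ _) _; apply: lerD; last exact: nb.
  apply: le_trans (ler_normD _ _) _; apply: lerD => //; exact: nb.
have -> : (E1 + P) * (E2 + Q) -
   (p0 * q0 + (p0 * q1 + p1 * q0) * x ^+ 2 + (p0 * q2 + p1 * q1 + p2 * q0) * x ^+ 4)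
  = E1 * E2 + P * E2 + E1 * Q + (p1 * q2 + p2 * q1) * x ^+ 6 + (p2 * q2) * (x ^+ 6 * x ^+ 2).
  by rewrite /P /Q; ring.
have b1 : `|E1 * E2| <= C * C' * e.
  rewrite normrM; apply: le_trans (@ler_pM _ _ _ _ _ (normr_ge0 E1) (normr_ge0 E2) h1 h2) _.
  rewrite mulrACA; apply: ler_wpM2l; first exact: mulr_ge0.
  by rewrite -[leRHS]mulr1 ler_wpM2l.
have b2 : `|P * E2| <= (`|p0| + `|p1| + `|p2|) * C' * e.
  by rewrite normrM -mulrA; apply: ler_pM.
have b3 : `|E1 * Q| <= C * (`|q0| + `|q1| + `|q2|) * e.
  by rewrite normrM mulrAC; apply: ler_pM.
have b4 : `|(p1 * q2 + p2 * q1) * x ^+ 6| <= `|p1 * q2 + p2 * q1| * e.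
  by rewrite normrM normrX.
have b5 : `|p2 * q2 * (x ^+ 6 * x ^+ 2)| <= `|p2 * q2| * e.
  rewrite normrM (normrM (x ^+ 6)) !normrX; apply: ler_wpM2l => //.
  by rewrite -[leRHS]mulr1 ler_wpM2l // exprn_ile1.
set A1 := `|_ * _ + _| in b4 *; set A2 := `|p2 * q2| in b5 *.
have := ler_normD (E1 * E2 + P * E2 + E1 * Q + (p1 * q2 + p2 * q1) * x ^+ 6) (p2 * q2 * (x ^+ 6 * x ^+ 2)).
have := ler_normD (E1 * E2 + P * E2 + E1 * Q) ((p1 * q2 + p2 * q1) * x ^+ 6).
have := ler_normD (E1 * E2 + P * E2) (E1 * Q).
have := ler_normD (E1 * E2) (P * E2).
move: b1 b2 b3 b4 b5; set K1 := `|p0| + _ + _; set K2 := `|q0| + _ + _.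
move=> b1 b2 b3 b4 b5 t1 t2 t3 t4.
have : C * C' * e + K1 * C' * e + C * K2 * e + A1 * e + A2 * e =
   (A1 + A2 + K1 * C' + C * K2 + C * C') * e by ring.
lra.
Qed.

Lemma ok_mul f g a0 a1 b0 b1 : ok f a0 a1 -> ok g b0 b1 ->
  ok (fun a => f a * g a) (a0 * b0) (a0 * b1 + a1 * b0).
Proof.
move=> /okW [a2 [C [d [d0 d1 C0 H]]]] /okW [b2 [C' [d' [d0' d1' C0' H']]]].
exists (a0 * b2 + a1 * b1 + a2 * b0), (`|a1 * b2 + a2 * b1| + `|a2 * b2| + (`|a0| + `|a1| + `|a2|) * C'
      + C * (`|b0| + `|b1| + `|b2|) + C * C'), (Num.min d d').
split; first by rewrite lt_min d0 d0'.
move=> a; rewrite lt_min => /andP[ad ad'].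
apply: mul_bound => //; [|exact: H|exact: H'].
by apply: ltW; apply: lt_le_trans d1.
Qed.

Lemma ok_div g r0 r1 m : 0 < m -> ok g r0 r1 ->
  ok (fun a => g a / (a ^+ 2 + m)) (r0 / m) ((r1 - r0 / m) / m).
Proof.
move=> m0 /okW [r2 [C [d [d0 d1 C0 H]]]].
set q0 := r0 / m; set q1 := (r1 - q0) / m; set q2 := (r2 - q1) / m.
exists q2, ((C + `|q2|) / m), d; split=> // a ad.
have den0 : 0 < a ^+ 2 + m by rewrite ltr_wpDl // sqr_ge0.
have dm : m <= a ^+ 2 + m by rewrite lerDr sqr_ge0.
have -> : g a / (a ^+ 2 + m) - (q0 + q1 * a ^+ 2 + q2 * a ^+ 4) =
   ((g a - (r0 + r1 * a ^+ 2 + r2 * a ^+ 4)) - q2 * a ^+ 6) / (a ^+ 2 + m).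
  rewrite /q2 /q1 /q0; field.
  by apply/andP; split; [rewrite lt0r_neq0 | rewrite lt0r_neq0].
set X := (g a - _) - _.
have hX : `|X| <= (C + `|q2|) * `|a| ^+ 6.
  apply: le_trans (ler_normB _ _) _; rewrite mulrDl; apply: lerD; first exact: H.
  by rewrite normrM normrX.
rewrite normrM normfV (gtr0_norm den0) mulrAC.
apply: le_trans (_ : `|X| / m <= _).
  by apply: ler_wpM2l => //; rewrite lef_pV2 // posrE.
by rewrite ler_pdivrMr // divfK // lt0r_neq0.
Qed.

Lemma ok_sum (r : seq nat) (F : nat -> R -> R) (c0 c1 : nat -> R) :
  (forall i, i \in r -> ok (F i) (c0 i) (c1 i)) ->
  ok (fun a => \sum_(i <- r) F i a) (\sum_(i <- r) c0 i) (\sum_(i <- r) c1 i).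
Proof.
elim: r => [|i r IH] h.
  rewrite !big_nil; apply: ok_ext (ok_const 0) => a; by rewrite big_nil.
rewrite !big_cons; apply: ok_ext (ok_add (h i (mem_head _ _)) (IH _)) => [a|j jr].
  by rewrite big_cons.
by apply: h; rewrite in_cons jr orbT.
Qed.

End Ana.



Section Struct.
Variable R : realFieldType.

Definition rhs (n : nat) (g : nat -> R) : R :=
   3 * g n.-1
    + 3 * (\sum_(1 <= j1 < n.-1) g j1 * g (n.-1 - j1)%N)
    + (\sum_(1 <= j1 < n.-1) \sum_(1 <= j2 < n.-1 - j1)
          g j1 * g j2 * g (n.-1 - j1 - j2)%N)
    - (\sum_(1 <= j1 < n | (2 * j1 < n)%N)
          ((n - 2 * j1)%N ^ 2)%:R * g j1 * g (n - j1)%N).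

Lemma size_ulist n (a : R) : size (ulist n a) = n.
Proof. by elim: n => //= n IH; rewrite size_rcons IH. Qed.

Lemma nth_ulist n (a : R) k : (k < n)%N -> nth 0 (ulist n a) k = u k.+1 a.
Proof.
elim: n => // n IH kn /=.
rewrite nth_rcons size_ulist.
case: (ltngtP k n) => [kn'|nk|->]; first by rewrite IH.
  by move: kn; rewrite ltnS leqNgt nk.
by rewrite /u /= nth_rcons size_ulist ltnn eqxx.
Qed.

Lemma U_eq n' (a : R) j : (0 < j <= n')%N -> nth 0 (ulist n' a) j.-1 = u j a.
Proof. by case: j => // j /andP[_ jn]; rewrite nth_ulist. Qed.

Lemma u_1 (a : R) : u 1 a = (a ^+ 2 + 1)^-1.
Proof. by []. Qed.

Lemma u_rec n (a : R) : (2 <= n)%N -> u n a = rhs n (fun j => u j a) / (a ^+ 2 + (n ^ 2)%:R).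
Proof.
case: n => // n n2.
rewrite {1}/u /= nth_rcons size_ulist ltnn eqxx /unext /=.
have -> : (n.+1 == 1%N) = false by case: n n2.
congr (_ / _); rewrite /rhs /=.
congr (_ + _ + _ - _).
- congr (_ * _); apply: eq_big_nat => i /andP[i1 i2]; rewrite !U_eq //; lia.
- apply: eq_big_nat => i /andP[i1 i2]; apply: eq_big_nat => j /andP[j1 j2]; rewrite !U_eq //; lia.
- rewrite big_nat_cond [in RHS]big_nat_cond; apply: eq_bigr => i /andP[/andP[i1 i2] i3]; rewrite !U_eq //; lia.
Qed.

End Struct.



Section Sym.
Variable R : realFieldType.

Definition w (n j : nat) : R := (n%:R - 2 * j%:R) ^+ 2.

Definition rhs' (n : nat) (g : nat -> R) : R :=
   3 * g n.-1
    + 3 * (\sum_(1 <= j1 < n.-1) g j1 * g (n.-1 - j1)%N)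
    + (\sum_(1 <= j1 < n.-1) g j1 * \sum_(1 <= j2 < n.-1 - j1)
          g j2 * g (n.-1 - j1 - j2)%N)
    - 2^-1 * (\sum_(1 <= j < n) w n j * g j * g (n - j)%N).

Definition L (n : nat) (z0 z1 : nat -> R) : R :=
   3 * z1 n.-1
    + 3 * (\sum_(1 <= j1 < n.-1) (z0 j1 * z1 (n.-1 - j1)%N + z1 j1 * z0 (n.-1 - j1)%N))
    + (\sum_(1 <= j1 < n.-1) (z0 j1 * \sum_(1 <= j2 < n.-1 - j1)
          (z0 j2 * z1 (n.-1 - j1 - j2)%N + z1 j2 * z0 (n.-1 - j1 - j2)%N)
        + z1 j1 * \sum_(1 <= j2 < n.-1 - j1) z0 j2 * z0 (n.-1 - j1 - j2)%N))
    - 2^-1 * (\sum_(1 <= j < n) (w n j * z0 j * z1 (n - j)%N + w n j * z1 j * z0 (n - j)%N)).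

Lemma half_sum n (F : nat -> R) :
  (forall j, (0 < j < n)%N -> F (n - j)%N = F j) ->
  (forall j, (2 * j = n)%N -> F j = 0) ->
  \sum_(1 <= j < n | (2 * j < n)%N) F j = 2^-1 * \sum_(1 <= j < n) F j.
Proof.
move=> Fs F0.
rewrite [in RHS](bigID (fun j => (2 * j < n)%N)) /=.
have E : \sum_(1 <= j < n | ~~ (2 * j < n)%N) F j = \sum_(1 <= j < n | (2 * j < n)%N) F j.
  rewrite big_nat_rev big_nat_cond.
  rewrite (eq_big (fun j => (1 <= j < n)%N && (2 * j <= n)%N) F); first last.
  - move=> j /andP[jr _]; have -> : (1 + n - j.+1 = n - j)%N by lia.
    by apply: Fs; lia.
  - by move=> j; lia.
  rewrite (bigID (fun j => (2 * j < n)%N)) /=.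
  rewrite [X in _ + X]big1 ?addr0; last by move=> j H; apply: F0; lia.
  by rewrite [RHS]big_nat_cond; apply: eq_bigl => j; lia.
by rewrite E; field.
Qed.

Lemma rev_sum s (F : nat -> R) : \sum_(1 <= j < s) F j = \sum_(1 <= j < s) F (s - j)%N.
Proof.
rewrite big_nat_rev; apply: eq_big_nat => j jr.
by have -> : (1 + s - j.+1 = s - j)%N by lia.
Qed.

Lemma widen_cond m k (G : nat -> R) : (k <= m)%N ->
  \sum_(1 <= j < k) G j = \sum_(1 <= j < m) (if (j < k)%N then G j else 0).
Proof. by move=> km; rewrite (big_nat_widen _ _ _ _ _ km) big_mkcond. Qed.

Lemma exch m (F : nat -> nat -> R) :
  \sum_(1 <= i < m) \sum_(1 <= j < m - i) F i j =
  \sum_(1 <= j < m) \sum_(1 <= i < m - j) F i j.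
Proof.
rewrite (eq_bigr (fun i => \sum_(1 <= j < m) (if (j < m - i)%N then F i j else 0)));
  last by move=> i _; apply: widen_cond; lia.
rewrite exchange_big /=; apply: eq_bigr => j _.
rewrite (widen_cond _ (_ : m - j <= m)%N); last by lia.
by apply: eq_bigr => i _; have -> : (j < m - i)%N = (i < m - j)%N by lia.
Qed.

Lemma rhs_sym n g : rhs n g = rhs' n g.
Proof.
rewrite /rhs /rhs'; congr (_ + _ - _).
  apply: eq_bigr => i _; rewrite mulr_sumr; apply: eq_bigr => j _.
  by rewrite mulrA.
rewrite (eq_bigr (fun j => w n j * g j * g (n - j)%N)); last first.
  move=> j jn; rewrite /w natrX natrB ?natrM //; lia.
apply: half_sum => [j jn|j jn].
  rewrite subKn; last by lia.
  rewrite /w natrB; last by lia.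
  ring.
by rewrite /w -jn natrM; ring.
Qed.

End Sym.

Section OkRhs.
Variable R : realFieldType.

Lemma ok_rhs n (z0 z1 : nat -> R) : (2 <= n)%N ->
  (forall j, (0 < j < n)%N -> ok (u j) (z0 j) (z1 j)) ->
  ok (fun a => rhs' n (fun j => u j a)) (rhs' n z0) (L n z0 z1).
Proof.
move=> n2 H; rewrite /rhs' /L.
apply: ok_sub; last first.
  apply: ok_scale; apply: ok_sum => j; rewrite mem_index_iota => jr.
  apply: ok_mul; first apply: ok_scale; apply: H; lia.
apply: ok_add; last first.
  apply: ok_sum => j; rewrite mem_index_iota => jr.
  apply: ok_mul; first by apply: H; lia.
  apply: ok_sum => k; rewrite mem_index_iota => kr.
  apply: ok_mul; apply: H; lia.
apply: ok_add.
  apply: ok_scale; apply: H; lia.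
apply: ok_scale; apply: ok_sum => j; rewrite mem_index_iota => jr.
apply: ok_mul; apply: H; lia.
Qed.

End OkRhs.



Section Closed.
Variable R : realFieldType.

Definition h : R := 2^-1.
Definition Z0 (j : nat) : R := (j%:R + 1) * h ^+ j.
Definition Z1 (j : nat) : R :=
  if j == 1%N then -1 else if j == 2%N then - (15%:R / 16%:R)
  else - (61%:R / (12%:R ^+ 2)) * ((j + 1)%N ^ 2)%:R / (2%:R ^+ j).
Definition Z1g (j : nat) : R := - (61 / 144) * (j%:R + 1) ^+ 2 * h ^+ j.

Definition c0_P (x S : R) : R := (0 - 2*x^+3 + 3*x^+2*S + 3*x^+2 + 3*x*S + 5*x) / 6.
Definition c0_c (S : R) : R := (S^+3 + 6*S^+2 - S - 6) / 6.
Definition t_P (x S : R) : R := (0 - 4*x^+5 + 15*x^+4*S + 35*x^+4 - 20*x^+3*S^+2 - 90*x^+3*S - 10*x^+3 + 10*x^+2*S^+3 + 60*x^+2*S^+2 - 25*x^+2*S - 95*x^+2 + 10*x*S^+3 + 80*x*S^+2 + 80*x*S - 46*x) / 120.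
Definition t_c (S : R) : R := (S^+5 + 15*S^+4 + 25*S^+3 - 135*S^+2 - 26*S + 120) / 120.
Definition e0_P (x S : R) : R := (0 - 24*x^+5 + 60*x^+4*S + 60*x^+4 - 50*x^+3*S^+2 - 80*x^+3*S + 15*x^+2*S^+3 + 15*x^+2*S^+2 - 60*x^+2*S - 60*x^+2 + 15*x*S^+3 + 65*x*S^+2 + 80*x*S + 24*x) / 30.
Definition e0_c (S : R) : R := (S^+5 + 10*S^+4 - 25*S^+3 - 10*S^+2 + 24*S) / 30.
Definition a_P (x S : R) : R := (0 - 3*x^+4 + 4*x^+3*S + 2*x^+3 + 6*x^+2*S + 9*x^+2 + 2*x*S + 4*x) / 12.
Definition a_c (S : R) : R := (S^+4 + 8*S^+3 + 11*S^+2 - 8*S - 12) / 12.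
Definition b_P (x S : R) : R := (0 - 10*x^+6 + 36*x^+5*S + 78*x^+5 - 45*x^+4*S^+2 - 180*x^+4*S + 35*x^+4 + 20*x^+3*S^+3 + 90*x^+3*S^+2 - 200*x^+3*S - 240*x^+3 + 30*x^+2*S^+3 + 225*x^+2*S^+2 + 150*x^+2*S - 205*x^+2 + 10*x*S^+3 + 90*x*S^+2 + 134*x*S - 18*x) / 360.
Definition b_c (S : R) : R := (S^+6 + 18*S^+5 + 70*S^+4 - 60*S^+3 - 431*S^+2 + 42*S + 360) / 360.
Definition d_P (x S : R) : R := (0 - 40*x^+6 + 96*x^+5*S + 72*x^+5 - 75*x^+4*S^+2 - 60*x^+4*S + 80*x^+4 + 20*x^+3*S^+3 - 30*x^+3*S^+2 - 200*x^+3*S - 120*x^+3 + 30*x^+2*S^+3 + 105*x^+2*S^+2 + 60*x^+2*S - 40*x^+2 + 10*x*S^+3 + 60*x*S^+2 + 104*x*S + 48*x) / 60.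
Definition d_c (S : R) : R := (S^+6 + 12*S^+5 - 5*S^+4 - 60*S^+3 + 4*S^+2 + 48*S) / 60.

Definition c0_p (x S : R) : R := (x + 1) * ((S - x) + 1).
Definition t_p (x S : R) : R := (x + 1) * c0_c (S - x).
Definition e0_p (x S : R) : R := (S - 2 * x) ^+ 2 * ((x + 1) * ((S - x) + 1)).
Definition a_p (x S : R) : R := (x + 1) ^+ 2 * ((S - x) + 1).
Definition b_p (x S : R) : R := (x + 1) ^+ 2 * c0_c (S - x).
Definition d_p (x S : R) : R := (S - 2 * x) ^+ 2 * ((x + 1) ^+ 2 * ((S - x) + 1)).

Lemma poly_sum s (f : nat -> R) (p P : R -> R -> R) (c : R -> R) :
  (1 <= s)%N ->
  (forall j, (1 <= j < s)%N -> f j = p j%:R s%:R * h ^+ s) ->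
  (forall x S, p x S = P (x + 1) S - P x S) ->
  (forall S, P S S - P 1 S = c S) ->
  \sum_(1 <= j < s) f j = c s%:R * h ^+ s.
Proof.
move=> s1 hf hp hc.
rewrite (eq_big_nat _ _ hf) -mulr_suml; congr (_ * _).
rewrite (telescope_sumr_eq (fun j => P j%:R s%:R)) //; last first.
  by move=> k _; rewrite hp -addn1 natrD.
Qed.

Lemma hsplit s j : (j <= s)%N -> h ^+ s = h ^+ j * h ^+ (s - j).
Proof. by move=> js; rewrite -exprD subnKC. Qed.

Definition C0 (s : nat) : R := \sum_(1 <= j < s) Z0 j * Z0 (s - j)%N.

Lemma C0E s : (1 <= s)%N -> C0 s = c0_c s%:R * h ^+ s.
Proof.
move=> s1; apply: (poly_sum (p := c0_p) (P := c0_P)) => //.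
- move=> j /andP[j1 js]; rewrite /Z0 /c0_p natrB ?(ltnW js) // (hsplit (ltnW js)); ring.
- by move=> x S; rewrite /c0_p /c0_P; field.
- by move=> S; rewrite /c0_P /c0_c; field.
Qed.


Lemma TE m : (1 <= m)%N -> \sum_(1 <= j < m) Z0 j * C0 (m - j)%N = t_c m%:R * h ^+ m.
Proof.
move=> m1; apply: (poly_sum (p := t_p) (P := t_P)) => //.
- move=> j /andP[j1 js]; rewrite C0E; last by lia.
  rewrite /Z0 /t_p natrB ?(ltnW js) // (hsplit (ltnW js)); ring.
- by move=> x S; rewrite /t_p /t_P /c0_c; field.
- by move=> S; rewrite /t_P /t_c; field.
Qed.

Lemma E0E n : (1 <= n)%N -> \sum_(1 <= j < n) w R n j * Z0 j * Z0 (n - j)%N = e0_c n%:R * h ^+ n.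
Proof.
move=> n1; apply: (poly_sum (p := e0_p) (P := e0_P)) => //.
- move=> j /andP[j1 js]; rewrite /w /Z0 /e0_p natrB ?(ltnW js) // (hsplit (ltnW js)); ring.
- by move=> x S; rewrite /e0_p /e0_P; field.
- by move=> S; rewrite /e0_P /e0_c; field.
Qed.

Lemma AgE s : (1 <= s)%N -> \sum_(1 <= j < s) Z1g j * Z0 (s - j)%N = - (61 / 144) * a_c s%:R * h ^+ s.
Proof.
move=> s1; apply: (poly_sum (p := fun x S => - (61 / 144) * a_p x S)
   (P := fun x S => - (61 / 144) * a_P x S) (c := fun S => - (61 / 144) * a_c S)) => //.
- move=> j /andP[j1 js]; rewrite /Z1g /Z0 /a_p natrB ?(ltnW js) // (hsplit (ltnW js)); ring.
- by move=> x S; rewrite /a_p /a_P; field.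
- by move=> S; rewrite /a_P /a_c; field.
Qed.

Lemma BgE s : (1 <= s)%N -> \sum_(1 <= j < s) Z1g j * C0 (s - j)%N = - (61 / 144) * b_c s%:R * h ^+ s.
Proof.
move=> s1; apply: (poly_sum (p := fun x S => - (61 / 144) * b_p x S)
   (P := fun x S => - (61 / 144) * b_P x S) (c := fun S => - (61 / 144) * b_c S)) => //.
- move=> j /andP[j1 js]; rewrite C0E; last by lia.
  rewrite /Z1g /b_p natrB ?(ltnW js) // (hsplit (ltnW js)); ring.
- by move=> x S; rewrite /b_p /b_P /c0_c; field.
- by move=> S; rewrite /b_P /b_c; field.
Qed.

Lemma DgE n : (1 <= n)%N -> \sum_(1 <= j < n) Z1g j * (w R n j * Z0 (n - j)%N) = - (61 / 144) * d_c n%:R * h ^+ n.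
Proof.
move=> n1; apply: (poly_sum (p := fun x S => - (61 / 144) * d_p x S)
   (P := fun x S => - (61 / 144) * d_P x S) (c := fun S => - (61 / 144) * d_c S)) => //.
- move=> j /andP[j1 js]; rewrite /w /Z1g /Z0 /d_p natrB ?(ltnW js) // (hsplit (ltnW js)); ring.
- by move=> x S; rewrite /d_p /d_P; field.
- by move=> S; rewrite /d_P /d_c; field.
Qed.

Lemma Z1E j : (3 <= j)%N -> Z1 j = Z1g j.
Proof.
case: j => [|[|[|j]]] // _; rewrite /Z1 /Z1g /h /=.
rewrite natrX exprVn; field; by rewrite expf_neq0 // pnatr_eq0.
Qed.

Lemma corr s (F : nat -> R) : (3 <= s)%N ->
  \sum_(1 <= j < s) Z1 j * F j =
  \sum_(1 <= j < s) Z1g j * F j + (- (11 / 72)) * F 1%N + (1 / 64) * F 2%N.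
Proof.
move=> s3.
do 2 (rewrite [in LHS]big_ltn; last by lia).
do 2 (rewrite [in RHS]big_ltn; last by lia).
rewrite (eq_big_nat _ _ (F2 := fun j => Z1g j * F j)); last first.
  by move=> j jr; rewrite Z1E //; lia.
have -> : Z1 1 = -1 by [].
have -> : Z1 2 = - (15%:R / 16%:R) by [].
rewrite /Z1g /h expr1 expr2; by field.
Qed.

End Closed.



Section Fin.
Variable R : realFieldType.

Lemma conv_sym s (z0 z1 : nat -> R) :
  \sum_(1 <= j < s) (z0 j * z1 (s - j)%N + z1 j * z0 (s - j)%N) =
  2 * \sum_(1 <= j < s) z1 j * z0 (s - j)%N.
Proof.
rewrite big_split /=.
have -> : \sum_(1 <= j < s) z0 j * z1 (s - j)%N = \sum_(1 <= j < s) z1 j * z0 (s - j)%N.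
  rewrite rev_sum; apply: eq_big_nat => j jr; rewrite subKn; last by lia.
  by rewrite mulrC.
ring.
Qed.

Lemma L_simpl n (z0 z1 : nat -> R) : L n z0 z1 =
  3 * z1 n.-1 + 6 * \sum_(1 <= j < n.-1) z1 j * z0 (n.-1 - j)%N
  + 3 * \sum_(1 <= j < n.-1) z1 j * (\sum_(1 <= i < n.-1 - j) z0 i * z0 (n.-1 - j - i)%N)
  - \sum_(1 <= j < n) z1 j * (w R n j * z0 (n - j)%N).
Proof.
rewrite /L conv_sym.
set m := n.-1.
rewrite [X in _ + X - _](eq_bigr (fun j1 => z0 j1 * (2 * \sum_(1 <= j2 < m - j1) z1 j2 * z0 (m - j1 - j2)%N)
   + z1 j1 * \sum_(1 <= j2 < m - j1) z0 j2 * z0 (m - j1 - j2)%N)); last first.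
  by move=> j _; rewrite conv_sym.
rewrite [X in _ + X - _]big_split /=.
have -> : \sum_(1 <= j1 < m) z0 j1 * (2 * \sum_(1 <= j2 < m - j1) z1 j2 * z0 (m - j1 - j2)%N)
  = 2 * \sum_(1 <= j < m) z1 j * (\sum_(1 <= i < m - j) z0 i * z0 (m - j - i)%N).
  rewrite (eq_bigr (fun j1 => 2 * \sum_(1 <= j2 < m - j1) z0 j1 * (z1 j2 * z0 (m - j1 - j2)%N)));
    last by move=> j _; rewrite mulrCA -mulr_sumr.
  rewrite -mulr_sumr exch; congr (_ * _); apply: eq_bigr => j _.
  rewrite mulr_sumr; apply: eq_bigr => i _.
  by rewrite subnAC mulrCA.
have -> : \sum_(1 <= j < n) (w R n j * z0 j * z1 (n - j)%N + w R n j * z1 j * z0 (n - j)%N)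
  = 2 * \sum_(1 <= j < n) z1 j * (w R n j * z0 (n - j)%N).
  rewrite big_split /= rev_sum.
  have -> : \sum_(1 <= j < n) w R n (n - j) * z0 (n - j)%N * z1 (n - (n - j))%N
     = \sum_(1 <= j < n) z1 j * (w R n j * z0 (n - j)%N).
    apply: eq_big_nat => j jr; rewrite subKn; last by lia.
    rewrite /w natrB; last by lia.
    ring.
  rewrite [X in _ + X](eq_bigr (fun j => z1 j * (w R n j * z0 (n - j)%N))); last by move=> j _; ring.
  ring.
by field.
Qed.


Lemma I0 m : (1 <= m)%N -> rhs' m.+1 (Z0 R) = ((m.+1 ^ 2)%N)%:R * Z0 R m.+1.
Proof.
move=> m1; rewrite /rhs' /=.
have -> : \sum_(1 <= j1 < m) Z0 R j1 * Z0 R (m - j1)%N = C0 R m by [].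
have -> : \sum_(1 <= j1 < m) Z0 R j1 * (\sum_(1 <= j2 < m - j1) Z0 R j2 * Z0 R (m - j1 - j2)%N)
   = \sum_(1 <= j1 < m) Z0 R j1 * C0 R (m - j1)%N by [].
rewrite TE // C0E // E0E //.
rewrite /Z0 natrX !(exprS (h R) m).
move: (h R ^+ m) => hm.
rewrite /h /t_c /c0_c /e0_c.
by field.
Qed.


Lemma I1 k : L k.+4 (Z0 R) (Z1 R) = Z0 R k.+4 + ((k.+4 ^ 2)%N)%:R * Z1 R k.+4.
Proof.
rewrite L_simpl /=.
have -> : \sum_(1 <= j < k.+3) Z1 R j * (\sum_(1 <= i < k.+3 - j) Z0 R i * Z0 R (k.+3 - j - i)%N)
   = \sum_(1 <= j < k.+3) Z1 R j * C0 R (k.+3 - j)%N by [].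
rewrite (corr (fun j => Z0 R (k.+3 - j)%N)) // (corr (fun j => C0 R (k.+3 - j)%N)) //.
rewrite (corr (fun j => w R k.+4 j * Z0 R (k.+4 - j)%N)) //.
rewrite AgE // BgE // DgE // !subSS !subn0 !C0E // !Z1E //.
rewrite /Z0 /Z1g /w natrX !(exprS (h R)).
move: (h R ^+ k) => hk.
rewrite /h /a_c /b_c /d_c /c0_c.
by field.
Qed.

End Fin.



Section Main.
Variable R : realFieldType.

Lemma Z1_1 : Z1 R 1 = -1. Proof. by []. Qed.
Lemma Z1_2 : Z1 R 2 = - (15%:R / 16%:R). Proof. by []. Qed.

Lemma I1_2 : L 2 (Z0 R) (Z1 R) = Z0 R 2 + ((2 ^ 2)%N)%:R * Z1 R 2.
Proof.
rewrite L_simpl /= big_nat1 !big_geq // Z1_1 Z1_2 /Z0 /w /h.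
by field.
Qed.

Lemma I1_3 : L 3 (Z0 R) (Z1 R) = Z0 R 3 + ((3 ^ 2)%N)%:R * Z1 R 3.
Proof.
rewrite L_simpl /= big_nat1 [X in _ - X]big_nat_recr //= big_nat1 big_geq // mulr0.
rewrite Z1_1 Z1_2 Z1E // /Z0 /Z1g /w /h.
rewrite big_nat1 Z1_1 !subSS !subn0 natrX. by field.
Qed.


Lemma main n : (1 <= n)%N -> ok (u (R:=R) n) (Z0 R n) (Z1 R n).
Proof.
elim/ltn_ind: n => n IH n1.
case: (ltngtP n 1) => [|n2|->]; first by lia.
- have n2' : (2 <= n)%N by [].
  have N0 : (0 : R) < ((n ^ 2)%N)%:R by rewrite ltr0n expn_gt0; lia.
  have H := ok_div N0 (ok_rhs (z0 := Z0 R) (z1 := Z1 R) n2' (fun j jr => IH j (ltac:(lia)) (ltac:(lia)))).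
  have H2 := ok_ext (g := u (R:=R) n) _ H.
  apply: ok_eq (H2 _) _ _.
  + by move=> a; rewrite u_rec // rhs_sym.
  + case: n {IH n1 n2 N0 H H2} n2' => [|[|m]] // _.
    by rewrite I0 // mulrC mulKf // lt0r_neq0 // ltr0n expn_gt0.
  + have NZ : ((n ^ 2)%N)%:R != (0 : R) by rewrite lt0r_neq0.
    have -> : rhs' n (Z0 R) = ((n ^ 2)%N)%:R * Z0 R n.
      by case: n {IH n1 n2 N0 H H2 NZ} n2' => [|[|m]] // _; rewrite I0.
    have -> : L n (Z0 R) (Z1 R) = Z0 R n + ((n ^ 2)%N)%:R * Z1 R n.
      case: n {IH n1 n2 N0 H H2 NZ} n2' => [|[|[|[|k]]]] // _.
      * exact: I1_2.
      * exact: I1_3.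
      * exact: I1.
    field; rewrite pnatr_eq0; lia.
- have H := ok_div ltr01 (ok_const 1).
  have H2 := ok_ext (g := u (R:=R) 1) _ (H R); apply: ok_eq (H2 _) _ _.
  + by move=> a; rewrite u_1 mul1r.
  + by rewrite /Z0 /h; field.
  + by rewrite Z1_1; field.
Qed.

End Main.

Lemma okA (R : realFieldType) n : (1 <= n)%N -> a2_coeff (u (R:=R) n) (Z1 R n).
Proof.
move=> n1; case: (main R n1) => c2 [C [d [d0 H]]].
by exists (Z0 R n), c2, C, d; split.
Qed.

Unset Implicit Arguments.

Theorem proposition11 (R : realFieldType) :
  a2_coeff (u (R:=R) 1) (-1) /\
  a2_coeff (u (R:=R) 2) (- (15%:R / 16%:R)) /\
  (forall n : nat, (3 <= n)%N ->
     a2_coeff (u (R:=R) n)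
       (- (61%:R / (12%:R ^+ 2)) * ((n + 1)%N ^ 2)%:R / (2%:R ^+ n))).
Proof.
split; first exact: (okA R (n:=1)).
split; first exact: (okA R (n:=2)).
move=> n n3; have := okA R (n:=n) (ltac:(lia)).
rewrite /Z1; have -> : (n == 1%N) = false by lia.
by have -> : (n == 2%N) = false by lia.
Qed.
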